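(* (GBC) The class $V$ of all sets, viewed as the ideal of all subsets of $V$ (i.e. the collection of those subclasses of $V$ that are sets), is a minimal access ideal for $V$.
   Context: GBC is Gödel–Bernays class theory with choice. An ideal on a class (or set) $X$ is a (definable) collection $\mathcal I$ of subclasses of $X$ such that (i) $Y_1,Y_2\in\mathcal I\Rightarrow Y_1\cup Y_2\in\mathcal I$, (ii) $Y\in\mathcal I$, $Z\subseteq Y\Rightarrow Z\in\mathcal I$, (iii) $X\notin\mathcal I$. A preordering of $X$ is a reflexive, transitive, total binary relation $\preccurlyeq$ on $X$; throughout, all preorderings are assumed to have no last element. For $x\in X$ let ${\preccurlyeq_x}=\{y\in X:y\preccurlyeq x\}$. A subclass $Y\subseteq X$ is $\preccurlyeq$-bounded if $Y\subseteq{\preccurlyeq_x}$ for some $x\in X$; otherwise it is cofinal. $Seg(\preccurlyeq)$ denotes the ideal of $\preccurlyeq$-bounded subclasses of $X$. An ideal $\mathcal I$ on $X$ is an access ideal for $X$ ($X$ is $\mathcal I$-accessible) if there is a preordering $\preccurlyeq$ of $X$ with $Seg(\preccurlyeq)\subseteq\mathcal I$; such $\preccurlyeq$ is called an $\mathcal I$-preordering. $\mathcal I$ is a minimal access ideal for $X$ if it is an access ideal for $X$ and for no ideal $\mathcal J\subsetneq\mathcal I$ is $X$ $\mathcal J$-accessible. *)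

(* Defs.v *)
(* A two-sorted model of GBC (Goedel-Bernays class theory with
   global choice), with predicative class comprehension stated as a scheme over
   a deep embedding of first-order formulas. *)

(* Formulas of the language of class theory.  Set variables and class
   variables are de Bruijn indices into two separate environments. *)
Inductive fml : Type :=
| FIn  : nat -> nat -> fml
| FEq  : nat -> nat -> fml
| FInC : nat -> nat -> fml
| FNot : fml -> fml
| FAnd : fml -> fml -> fml
| FOr  : fml -> fml -> fml
| FImp : fml -> fml -> fml
| FAll : fml -> fml
| FEx  : fml -> fml
| FAllC : fml -> fml
| FExC  : fml -> fml.

Fixpoint predicative (p : fml) : Prop :=
  match p with
  | FIn _ _ | FEq _ _ | FInC _ _ => True
  | FNot q | FAll q | FEx q => predicative q
  | FAnd q r | FOr q r | FImp q r => predicative q /\ predicative r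
  | FAllC _ | FExC _ => False
  end.

Definition scons {T : Type} (x : T) (e : nat -> T) : nat -> T :=
  fun n => match n with 0 => x | Datatypes.S m => e m end.

Section Semantics.
Variables (Tset Tcls : Type) (elem : Tset -> Tset -> Prop)
          (cmem : Tset -> Tcls -> Prop).

Fixpoint sat (e : nat -> Tset) (ce : nat -> Tcls) (p : fml) : Prop :=
  match p with
  | FIn i j => elem (e i) (e j)
  | FEq i j => e i = e j
  | FInC i k => cmem (e i) (ce k)
  | FNot q => ~ sat e ce q
  | FAnd q r => sat e ce q /\ sat e ce r
  | FOr q r => sat e ce q \/ sat e ce r
  | FImp q r => sat e ce q -> sat e ce r
  | FAll q => forall x, sat (scons x e) ce q
  | FEx q => exists x, sat (scons x e) ce q
  | FAllC q => forall A, sat e (scons A ce) q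
  | FExC q => exists A, sat e (scons A ce) q
  end.

(* p is the Kuratowski ordered pair (x, y) = {{x}, {x, y}} *)
Definition is_pair (x y p : Tset) : Prop :=
  forall z, elem z p <->
    ((forall w, elem w z <-> w = x) \/ (forall w, elem w z <-> w = x \/ w = y)).

Definition functional (F : Tcls) : Prop :=
  forall x y1 y2 p1 p2, is_pair x y1 p1 -> cmem p1 F ->
    is_pair x y2 p2 -> cmem p2 F -> y1 = y2.

End Semantics.

Record GBC_model : Type := {
  gset : Type;
  gcls : Type;
  elem : gset -> gset -> Prop;
  cmem : gset -> gcls -> Prop;
  ax_ext_set : forall x y, (forall z, elem z x <-> elem z y) -> x = y;
  ax_ext_cls : forall A B, (forall z, cmem z A <-> cmem z B) -> A = B;
  ax_pair : forall x y, exists p, forall z, elem z p <-> z = x \/ z = y;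
  ax_union : forall x, exists u, forall z,
      elem z u <-> exists y, elem y x /\ elem z y;
  ax_power : forall x, exists p, forall z,
      elem z p <-> (forall w, elem w z -> elem w x);
  ax_infinity : exists i,
      (exists e, elem e i /\ forall w, ~ elem w e) /\
      (forall y, elem y i -> exists s, elem s i /\
          forall z, elem z s <-> elem z y \/ z = y);
  ax_foundation : forall x, (exists y, elem y x) ->
      exists y, elem y x /\ ~ (exists z, elem z y /\ elem z x);
  ax_replacement : forall F, functional gset gcls elem cmem F ->
      forall a, exists b, forall y, elem y b <->
        exists x p, elem x a /\ is_pair gset elem x y p /\ cmem p F;
  ax_comprehension : forall (phi : fml), predicative phi ->
      forall (e : nat -> gset) (ce : nat -> gcls),
      exists A, forall x, cmem x A <-> sat gset gcls elem cmem (scons x e) ce phi;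
  ax_global_choice : exists G, functional gset gcls elem cmem G /\
      forall x, (exists y, elem y x) ->
        exists y p, elem y x /\ is_pair gset elem x y p /\ cmem p G
}.

Arguments elem {g}.
Arguments cmem {g}.

Section Ideals.
Variable M : GBC_model.

Definition subclass (A B : gcls M) : Prop := forall z, cmem z A -> cmem z B.

Definition definable_coll (P : gcls M -> Prop) : Prop :=
  exists (psi : fml) (e : nat -> gset M) (ce : nat -> gcls M),
    forall A, P A <-> sat (gset M) (gcls M) (@elem M) (@cmem M) e (scons A ce) psi.

Definition is_ideal (X : gcls M) (I : gcls M -> Prop) : Prop :=
  definable_coll I /\
  (forall Y, I Y -> subclass Y X) /\
  (forall Y1 Y2 Y, I Y1 -> I Y2 ->
     (forall z, cmem z Y <-> cmem z Y1 \/ cmem z Y2) -> I Y) /\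
  (forall Y Z, I Y -> subclass Z Y -> I Z) /\
  ~ I X.

Definition rle (R : gcls M) (y x : gset M) : Prop :=
  exists p, is_pair (gset M) (@elem M) y x p /\ cmem p R.

Definition preordering (X R : gcls M) : Prop :=
  (forall p, cmem p R -> exists y x, is_pair (gset M) (@elem M) y x p /\ cmem y X /\ cmem x X) /\
  (forall x, cmem x X -> rle R x x) /\
  (forall x y z, cmem x X -> cmem y X -> cmem z X -> rle R x y -> rle R y z -> rle R x z) /\
  (forall x y, cmem x X -> cmem y X -> rle R x y \/ rle R y x) /\
  (forall x, cmem x X -> exists y, cmem y X /\ ~ rle R y x).

Definition bounded (X R Y : gcls M) : Prop :=
  exists x, cmem x X /\ forall y, cmem y Y -> cmem y X /\ rle R y x.

Definition seg_sub (X R : gcls M) (I : gcls M -> Prop) : Prop :=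
  forall Y, subclass Y X -> bounded X R Y -> I Y.

Definition accessible (X : gcls M) (I : gcls M -> Prop) : Prop :=
  exists R, preordering X R /\ seg_sub X R I.

Definition access_ideal (X : gcls M) (I : gcls M -> Prop) : Prop :=
  is_ideal X I /\ accessible X I.

Definition minimal_access_ideal (X : gcls M) (I : gcls M -> Prop) : Prop :=
  access_ideal X I /\
  forall J, is_ideal X J -> (forall A, J A -> I A) -> (exists A, I A /\ ~ J A) ->
    ~ accessible X J.

Definition set_classes (A : gcls M) : Prop :=
  exists a, forall z, cmem z A <-> elem z a.

End Ideals.

(* Main.v *)
Require Import Defs.
From Stdlib Require Import Classical.

Section Dev.
Variable M : GBC_model.
Local Notation St := (gset M).
Local Notation Cl := (gcls M).
Local Notation "x ∈ y" := (@elem M x y) (at level 70).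
Local Notation "x ∈c A" := (@cmem M x A) (at level 70).
Local Notation sat := (sat St Cl (@elem M) (@cmem M)).
Local Notation ispair := (is_pair St (@elem M)).

Definition Iff (a b : fml) := FAnd (FImp a b) (FImp b a).

Definition fPair (i j k : nat) : fml :=
  FAll (Iff (FIn 0 (S k)) (FOr (FAll (Iff (FIn 0 1) (FEq 0 (S (S i)))))
                                (FAll (Iff (FIn 0 1) (FOr (FEq 0 (S (S i))) (FEq 0 (S (S j)))))))).

Definition Def1 (P : St -> Prop) := exists phi e ce, predicative phi /\
  forall x, P x <-> sat (scons x e) ce phi.

Ltac defp phi e ce := exists phi, e, ce; split; [simpl; tauto | intro; reflexivity].

Lemma ext : forall x y : St, (forall z, z ∈ x <-> z ∈ y) -> x = y.
Proof. exact (ax_ext_set M). Qed.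

Lemma upair (x y : St) : exists p, forall z, z ∈ p <-> z = x \/ z = y.
Proof. exact (ax_pair M x y). Qed.

Lemma single (x : St) : exists s, forall z, z ∈ s <-> z = x.
Proof. destruct (upair x x) as [s Hs]. exists s. intro z. rewrite Hs. tauto. Qed.

Lemma kpair (x y : St) : exists p, ispair x y p.
Proof.
  destruct (single x) as [s Hs]; destruct (upair x y) as [t Ht]; destruct (upair s t) as [p Hp].
  exists p. intro z. rewrite Hp. split.
  - intros [H|H]; subst z; [left; exact Hs | right; exact Ht].
  - intros [H|H]; [left|right]; apply ext; intro w; rewrite H; [rewrite Hs | rewrite Ht]; tauto.
Qed.

Lemma pair_mem x y p : ispair x y p -> forall q, q ∈ p -> forall w, w ∈ q -> w = x \/ w = y.
Proof. intros H q Hq w Hw. apply H in Hq. destruct Hq as [Hq|Hq]; apply Hq in Hw; tauto. Qed.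

Lemma pair_inj x y x' y' p : ispair x y p -> ispair x' y' p -> x = x' /\ y = y'.
Proof.
  intros H H'.
  assert (Hx : x = x').
  { destruct (single x) as [s Hs].
    assert (Hsp : s ∈ p) by (apply H; left; exact Hs).
    destruct (pair_mem _ _ _ H' s Hsp x) as [E|E]; [apply Hs; reflexivity| |].
    - exact E.
    - apply H' in Hsp. destruct Hsp as [Hq|Hq].
      + symmetry; apply Hs; apply Hq; reflexivity.
      + symmetry; apply Hs; apply Hq; left; reflexivity. }
  subst x'. split; [reflexivity|].
  destruct (upair x y) as [q Hq]. destruct (upair x y') as [q' Hq'].
  assert (Hqp : q ∈ p) by (apply H; right; exact Hq).
  assert (Hqp' : q' ∈ p) by (apply H'; right; exact Hq').
  assert (A : y = x \/ y = y') by (apply (pair_mem _ _ _ H' q Hqp); apply Hq; right; reflexivity).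
  assert (B : y' = x \/ y' = y) by (apply (pair_mem _ _ _ H q' Hqp'); apply Hq'; right; reflexivity).
  destruct A, B; congruence.
Qed.

Lemma def_class P : Def1 P -> exists A, forall x, x ∈c A <-> P x.
Proof.
  intros [phi [e [ce [Hp HP]]]].
  destruct (ax_comprehension M phi Hp e ce) as [A HA].
  exists A. intro x. rewrite HA, HP. reflexivity.
Qed.

Lemma sep (A : Cl) (a : St) : exists b, forall z, z ∈ b <-> z ∈ a /\ z ∈c A.
Proof.
  destruct (def_class (fun p => exists x, x ∈c A /\ ispair x x p)) as [F HF].
  { defp (FEx (FAnd (FInC 0 0) (fPair 0 0 1))) (fun _ : nat => a) (fun _ : nat => A). }
  assert (Hf : functional St Cl (@elem M) (@cmem M) F).
  { intros x y1 y2 p1 p2 H1 H1F H2 H2F.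
    apply HF in H1F; apply HF in H2F.
    destruct H1F as [x1 [_ E1]]; destruct H2F as [x2 [_ E2]].
    destruct (pair_inj _ _ _ _ _ H1 E1). destruct (pair_inj _ _ _ _ _ H2 E2). congruence. }
  destruct (ax_replacement M F Hf a) as [b Hb].
  exists b. intro z. rewrite Hb. split.
  - intros [x [p [Hx [Hp HpF]]]]. apply HF in HpF. destruct HpF as [x1 [Hx1 E1]].
    destruct (pair_inj _ _ _ _ _ Hp E1). subst. split; assumption.
  - intros [Hz HzA]. destruct (kpair z z) as [p Hp]. exists z, p. split; [exact Hz|].
    split; [exact Hp|]. apply HF. exists z. split; assumption.
Qed.

Lemma sepP P a : Def1 P -> exists b, forall z, z ∈ b <-> z ∈ a /\ P z.
Proof.
  intro HP. destruct (def_class P HP) as [A HA]. destruct (sep A a) as [b Hb].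
  exists b. intro z. rewrite Hb, HA. reflexivity.
Qed.

Lemma no2 (a b : St) : a ∈ b -> b ∈ a -> False.
Proof.
  intros H1 H2. destruct (upair a b) as [p Hp].
  destruct (ax_foundation M p) as [y [Hy1 Hy2]].
  { exists a; apply Hp; left; reflexivity. }
  apply Hp in Hy1. destruct Hy1 as [E|E]; subst y; apply Hy2.
  - exists b. split; [exact H2| apply Hp; right; reflexivity].
  - exists a. split; [exact H1| apply Hp; left; reflexivity].
Qed.

Lemma no1 (a : St) : a ∈ a -> False.
Proof. intro H. exact (no2 a a H H). Qed.

Lemma binunion (a b : St) : exists u, forall z, z ∈ u <-> z ∈ a \/ z ∈ b.
Proof.
  destruct (upair a b) as [p Hp]. destruct (ax_union M p) as [u Hu].
  exists u. intro z. rewrite Hu. split.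
  - intros [y [Hy Hz]]. apply Hp in Hy. destruct Hy; subst; tauto.
  - intros [H|H]; [exists a | exists b]; split; try assumption; apply Hp; tauto.
Qed.


Definition Empty (x : St) := forall w, ~ w ∈ x.
Definition Succ (u v : St) := forall z, z ∈ v <-> z ∈ u \/ z = u.
Definition Ind (s : St) := (exists e, e ∈ s /\ Empty e) /\ forall u, u ∈ s -> exists v, v ∈ s /\ Succ u v.
Definition Nat (n : St) := forall s, Ind s -> n ∈ s.
Definition Cum (s t : St) := forall z, z ∈ t <-> z ∈ s \/ exists w, w ∈ s /\ z ∈ w.
Definition Att (y g : St) := forall k s p, ispair k s p -> p ∈ g ->
   (Empty k /\ s = y) \/ exists k' s' p', ispair k' s' p' /\ p' ∈ g /\ Succ k' k /\ Cum s' s.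
Definition Val (y k s : St) := exists g p, Att y g /\ ispair k s p /\ p ∈ g.

Definition fEmpty i := FAll (FNot (FIn 0 (S i))).
Definition fSucc i j := FAll (Iff (FIn 0 (S j)) (FOr (FIn 0 (S i)) (FEq 0 (S i)))).
Definition fInd i := FAnd (FEx (FAnd (FIn 0 (S i)) (fEmpty 0)))
   (FAll (FImp (FIn 0 (S i)) (FEx (FAnd (FIn 0 (S (S i))) (fSucc 1 0))))).
Definition fNat i := FAll (FImp (fInd 0) (FIn (S i) 0)).
Definition fCum i j := FAll (Iff (FIn 0 (S j)) (FOr (FIn 0 (S i)) (FEx (FAnd (FIn 0 (S (S i))) (FIn 1 0))))).
Definition fAtt y g := FAll (FAll (FAll (FImp (fPair 2 1 0) (FImp (FIn 0 (3+g))
  (FOr (FAnd (fEmpty 2) (FEq 1 (3+y)))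
       (FEx (FEx (FEx (FAnd (fPair 2 1 0) (FAnd (FIn 0 (6+g)) (FAnd (fSucc 2 5) (fCum 1 4)))))))))))).
Definition fVal y k s := FEx (FEx (FAnd (fAtt (2+y) 1) (FAnd (fPair (2+k) (2+s) 0) (FIn 0 1)))).

Lemma Nat_empty e : Empty e -> Nat e.
Proof.
  intros He s [[e' [He' He'e]] _]. replace e with e'; [exact He'|].
  apply ext; intro z; split; intro Hz; [destruct (He'e z Hz) | destruct (He z Hz)].
Qed.

Lemma Succ_ext u v v' : Succ u v -> Succ u v' -> v = v'.
Proof. intros H H'. apply ext; intro z; specialize (H z); specialize (H' z); tauto. Qed.

Lemma Nat_succ n v : Nat n -> Succ n v -> Nat v.
Proof.
  intros Hn Hv s Hs. pose proof (Hn s Hs) as Hns. destruct Hs as [_ Hs].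
  destruct (Hs n Hns) as [v' [Hv' Hsv']]. rewrite (Succ_ext _ _ _ Hv Hsv'). exact Hv'.
Qed.

Lemma Succ_inj a b v : Succ a v -> Succ b v -> a = b.
Proof.
  intros Ha Hb.
  assert (A : a ∈ v) by (apply Ha; right; reflexivity).
  assert (B : b ∈ v) by (apply Hb; right; reflexivity).
  apply Hb in A. apply Ha in B.
  destruct A as [A|A]; [|exact A]. destruct B as [B|B]; [|symmetry; exact B].
  destruct (no2 _ _ A B).
Qed.

Lemma succ_ex u : exists v, Succ u v.
Proof.
  destruct (single u) as [s Hs]. destruct (binunion u s) as [v Hv].
  exists v. intro z. rewrite Hv, Hs. reflexivity.
Qed.

Lemma cum_ex s : exists t, Cum s t.
Proof.
  destruct (ax_union M s) as [U HU]. destruct (binunion s U) as [t Ht].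
  exists t. intro z. rewrite Ht, HU. reflexivity.
Qed.

Lemma Nat_ind P : Def1 P -> (forall e, Empty e -> P e) ->
  (forall n v, Nat n -> P n -> Succ n v -> P v) -> forall n, Nat n -> P n.
Proof.
  intros HP H0 HS.
  destruct (ax_infinity M) as [i Hi]. change (Ind i) in Hi.
  destruct (sepP (fun x => Nat x /\ P x) i) as [s Hs].
  { destruct HP as [phi [e [ce [Hp HP]]]].
    exists (FAnd (fNat 0) phi), e, ce. split; [simpl; tauto|].
    intro x. rewrite HP. reflexivity. }
  assert (HI : Ind s).
  { split.
    - destruct Hi as [[e [He1 He2]] _]. exists e. split; [|exact He2]. apply Hs.
      split; [exact He1|]. split; [apply Nat_empty; exact He2 | apply H0; exact He2].
    - intros u Hu. apply Hs in Hu. destruct Hu as [Hui [Hun Hup]].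
      destruct Hi as [_ Hi2]. destruct (Hi2 u Hui) as [v [Hv1 Hv2]]. exists v. split; [|exact Hv2].
      apply Hs. split; [exact Hv1|]. split; [apply (Nat_succ u v Hun Hv2) | apply (HS u v Hun Hup Hv2)]. }
  intros n Hn. specialize (Hn s HI). apply Hs in Hn. tauto.
Qed.

Lemma Val_base y e : Empty e -> Val y e y.
Proof.
  intro He. destruct (kpair e y) as [p Hp]. destruct (single p) as [g Hg].
  exists g, p. split; [|split; [exact Hp| apply Hg; reflexivity]].
  intros k s p' Hp' Hg'. apply Hg in Hg'. subst p'. destruct (pair_inj _ _ _ _ _ Hp Hp'). subst. left; split; [exact He | reflexivity].
Qed.

Lemma Val_step y k s v t : Val y k s -> Succ k v -> Cum s t -> Val y v t.
Proof.
  intros [g [p [Hg [Hp Hpg]]]] Hv Ht.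
  destruct (kpair v t) as [p0 Hp0]. destruct (single p0) as [sg Hsg]. destruct (binunion g sg) as [g' Hg'].
  exists g', p0. split; [|split; [exact Hp0| apply Hg'; right; apply Hsg; reflexivity]].
  intros k1 s1 p1 Hp1 Hp1g. apply Hg' in Hp1g. destruct Hp1g as [Hp1g|Hp1g].
  - destruct (Hg k1 s1 p1 Hp1 Hp1g) as [L|[k' [s' [p' [A [B [C D]]]]]]]; [left; exact L|].
    right. exists k', s', p'. split; [exact A|]. split; [apply Hg'; left; exact B|]. split; assumption.
  - apply Hsg in Hp1g. subst p1. destruct (pair_inj _ _ _ _ _ Hp0 Hp1). subst.
    right. exists k, s, p. split; [exact Hp|]. split; [apply Hg'; left; exact Hpg|]. split; assumption.
Qed.

Lemma Val_inv0 y e s : Val y e s -> Empty e -> s = y.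
Proof.
  intros [g [p [Hg [Hp Hpg]]]] He.
  destruct (Hg e s p Hp Hpg) as [[_ E]|[k' [s' [p' [_ [_ [C _]]]]]]]; [exact E|].
  exfalso. apply (He k'). apply C. right; reflexivity.
Qed.

Lemma Val_inv y n v s : Val y v s -> Succ n v -> exists s', Val y n s' /\ Cum s' s.
Proof.
  intros [g [p [Hg [Hp Hpg]]]] Hv.
  destruct (Hg v s p Hp Hpg) as [[E _]|[k' [s' [p' [A [B [C D]]]]]]].
  - exfalso. apply (E n). apply Hv. right; reflexivity.
  - rewrite (Succ_inj _ _ _ C Hv) in A. exists s'. split; [|exact D]. exists g, p'. tauto.
Qed.

Lemma Val_uniq y : forall k, Nat k -> forall s s', Val y k s -> Val y k s' -> s = s'.
Proof.
  apply (Nat_ind (fun k => forall s s', Val y k s -> Val y k s' -> s = s')).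
  - destruct (ax_global_choice M) as [G _].
    defp (FAll (FAll (FImp (fVal 3 2 1) (FImp (fVal 3 2 0) (FEq 1 0))))) (fun _ : nat => y) (fun _ : nat => G).
  - intros e He s s' H H'. rewrite (Val_inv0 _ _ _ H He), (Val_inv0 _ _ _ H' He). reflexivity.
  - intros n v Hn IH Hv s s' H H'.
    destruct (Val_inv _ _ _ _ H Hv) as [a [Ha Ca]].
    destruct (Val_inv _ _ _ _ H' Hv) as [b [Hb Cb]].
    rewrite (IH a b Ha Hb) in Ca. apply ext. intro z. specialize (Ca z); specialize (Cb z); tauto.
Qed.


Lemma Nat_in_i i : Ind i -> forall n, Nat n -> n ∈ i.
Proof. intros Hi n Hn. exact (Hn i Hi). Qed.

Lemma tc (x : St) : exists T, x ∈ T /\ forall z, z ∈ T -> forall w, w ∈ z -> w ∈ T.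
Proof.
  destruct (ax_global_choice M) as [G _].
  destruct (single x) as [y Hy].
  destruct (ax_infinity M) as [i Hi]. change (Ind i) in Hi.
  destruct (sepP Nat i) as [om Hom].
  { defp (fNat 0) (fun _ : nat => x) (fun _ : nat => G). }
  destruct (def_class (fun p => exists k s, ispair k s p /\ Nat k /\ Val y k s)) as [F HF].
  { defp (FEx (FEx (FAnd (fPair 1 0 2) (FAnd (fNat 1) (fVal 3 1 0))))) (fun _ : nat => y) (fun _ : nat => G). }
  assert (Hf : functional St Cl (@elem M) (@cmem M) F).
  { intros k s1 s2 p1 p2 H1 H1F H2 H2F.
    apply HF in H1F; apply HF in H2F.
    destruct H1F as [k1 [t1 [E1 [N1 V1]]]]; destruct H2F as [k2 [t2 [E2 [N2 V2]]]].
    destruct (pair_inj _ _ _ _ _ H1 E1). destruct (pair_inj _ _ _ _ _ H2 E2). subst.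
    exact (Val_uniq y k2 N1 _ _ V1 V2). }
  destruct (ax_replacement M F Hf om) as [B HB].
  destruct (ax_union M B) as [T HT].
  assert (HinB : forall k s, Nat k -> Val y k s -> s ∈ B).
  { intros k s Hk Hv. apply HB. destruct (kpair k s) as [p Hp]. exists k, p.
    split; [apply Hom; split; [apply Nat_in_i; assumption | exact Hk]|].
    split; [exact Hp|]. apply HF. exists k, s. tauto. }
  exists T. split.
  - destruct Hi as [[e [He1 He2]] Hi2]. apply HT. exists y. split; [|apply Hy; reflexivity].
    apply (HinB e); [apply Nat_empty; exact He2 | apply Val_base; exact He2].
  - intros z Hz w Hw. apply HT in Hz. destruct Hz as [s [HsB Hzs]].
    apply HB in HsB. destruct HsB as [k [p [Hk [Hp HpF]]]].
    apply HF in HpF. destruct HpF as [k1 [s1 [E1 [N1 V1]]]].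
    destruct (pair_inj _ _ _ _ _ Hp E1). subst k1 s1.
    destruct (succ_ex k) as [v Hv]. destruct (cum_ex s) as [t Ht].
    apply HT. exists t. split.
    + apply (HinB v); [exact (Nat_succ _ _ N1 Hv)| exact (Val_step _ _ _ _ _ V1 Hv Ht)].
    + apply Ht. right. exists z. split; assumption.
Qed.

Lemma eps_ind_cl (A : Cl) : (forall x, (forall u, u ∈ x -> u ∈c A) -> x ∈c A) -> forall x, x ∈c A.
Proof.
  intros H x. apply NNPP; intro Hx.
  destruct (tc x) as [T [HxT HT]].
  destruct (def_class (fun z => ~ z ∈c A)) as [N HN].
  { defp (FNot (FInC 0 0)) (fun _ : nat => x) (fun _ : nat => A). }
  destruct (sep N T) as [D HD].
  destruct (ax_foundation M D) as [m [Hm1 Hm2]].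
  { exists x. apply HD. split; [exact HxT| apply HN; exact Hx]. }
  apply HD in Hm1. destruct Hm1 as [HmT HmN]. apply HN in HmN. apply HmN. apply H. intros u Hu.
  apply NNPP; intro Hu'. apply Hm2. exists u. split; [exact Hu|]. apply HD.
  split; [exact (HT m HmT u Hu)| apply HN; exact Hu'].
Qed.

Lemma eps_ind P : Def1 P -> (forall x, (forall u, u ∈ x -> P u) -> P x) -> forall x, P x.
Proof.
  intros HP H. destruct (def_class P HP) as [A HA].
  intro x. apply HA. apply eps_ind_cl. intros z Hz. apply HA. apply H. intros u Hu. apply HA. apply Hz. exact Hu.
Qed.


Definition Sub (x y : St) := forall u, u ∈ x -> u ∈ y.
Definition Tower (T : St) := forall V, V ∈ T -> forall x, x ∈ V <-> exists W, W ∈ T /\ W ∈ V /\ Sub x W.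
Definition Lev (V : St) := exists T, Tower T /\ V ∈ T.
Definition Cmp (V V' : St) := V ∈ V' \/ V = V' \/ V' ∈ V.

Definition fSub i j := FAll (FImp (FIn 0 (S i)) (FIn 0 (S j))).
Definition fTower t := FAll (FImp (FIn 0 (S t)) (FAll (Iff (FIn 0 1)
   (FEx (FAnd (FIn 0 (3+t)) (FAnd (FIn 0 2) (fSub 1 0))))))).
Definition fLev v := FEx (FAnd (fTower 0) (FIn (S v) 0)).
Definition fCmp i j := FOr (FIn i j) (FOr (FEq i j) (FIn j i)).

Lemma T_trans T : Tower T -> forall V, V ∈ T -> forall x, x ∈ V -> forall u, u ∈ x -> u ∈ V.
Proof.
  intro HT. destruct (ax_global_choice M) as [G _].
  apply (eps_ind (fun V => V ∈ T -> forall x, x ∈ V -> forall u, u ∈ x -> u ∈ V)).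
  { defp (FImp (FIn 0 1) (FAll (FImp (FIn 0 1) (FAll (FImp (FIn 0 1) (FIn 0 2)))))) (fun _ : nat => T) (fun _ : nat => G). }
  intros V IH HV x Hx u Hu.
  apply (HT V HV) in Hx. destruct Hx as [W [HWT [HWV HxW]]].
  pose proof (HxW u Hu) as HuW.
  apply (HT W HWT) in HuW. destruct HuW as [W1 [HW1T [HW1W HuW1]]].
  apply (HT V HV). exists W. split; [exact HWT|]. split; [exact HWV|].
  intros a Ha. exact (IH W HWV HWT W1 HW1W a (HuW1 a Ha)).
Qed.

Lemma Lev_trans V : Lev V -> forall x, x ∈ V -> Sub x V.
Proof. intros [T [HT HV]] x Hx u Hu. exact (T_trans T HT V HV x Hx u Hu). Qed.

Lemma Lev_cmp : forall V, Lev V -> forall V', Lev V' -> Cmp V V'.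
Proof.
  destruct (ax_global_choice M) as [G _]. destruct (ax_infinity M) as [i0 _].
  apply (eps_ind (fun V => Lev V -> forall V', Lev V' -> Cmp V V')).
  { defp (FImp (fLev 0) (FAll (FImp (fLev 0) (fCmp 1 0)))) (fun _ : nat => i0) (fun _ : nat => G). }
  intros V IHo HV.
  apply (eps_ind (fun V' => Lev V' -> Cmp V V')).
  { defp (FImp (fLev 0) (fCmp 1 0)) (fun _ : nat => V) (fun _ : nat => G). }
  intros V' IHi HV'.
  destruct (classic (V ∈ V')) as [C1|C1]; [left; exact C1|].
  destruct (classic (V' ∈ V)) as [C2|C2]; [right; right; exact C2|].
  right; left.
  destruct HV as [T [HT HVT]]. destruct HV' as [T' [HT' HVT']].
  apply ext. intro z. split; intro Hz.
  - apply (HT V HVT) in Hz. destruct Hz as [W [HWT [HWV HzW]]].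
    destruct (IHo W HWV (ex_intro _ T (conj HT HWT)) V' (ex_intro _ T' (conj HT' HVT'))) as [D|[D|D]].
    + apply (HT' V' HVT') in D. destruct D as [W1 [HW1 [HW1V HWW1]]].
      apply (HT' V' HVT'). exists W1. split; [exact HW1|]. split; [exact HW1V|].
      intros a Ha. exact (HWW1 a (HzW a Ha)).
    + subst W. contradiction.
    + exfalso. apply C2. exact (T_trans T HT V HVT W HWV V' D).
  - apply (HT' V' HVT') in Hz. destruct Hz as [W [HWT [HWV HzW]]].
    destruct (IHi W HWV (ex_intro _ T' (conj HT' HWT))) as [D|[D|D]].
    + exfalso. apply C1. exact (T_trans T' HT' V' HVT' W HWV V D).
    + subst W. contradiction.
    + apply (HT V HVT) in D. destruct D as [W1 [HW1 [HW1V HWW1]]].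
      apply (HT V HVT). exists W1. split; [exact HW1|]. split; [exact HW1V|].
      intros a Ha. exact (HWW1 a (HzW a Ha)).
Qed.

Definition Acc (S0 A : St) := forall x, x ∈ A <-> exists W, W ∈ S0 /\ Sub x W.
Definition DC (S0 : St) := (forall W, W ∈ S0 -> Lev W) /\
  (forall W, W ∈ S0 -> forall W', Lev W' -> W' ∈ W -> W' ∈ S0).

Lemma acc_ex S0 : exists A, Acc S0 A.
Proof.
  destruct (ax_global_choice M) as [G _].
  destruct (ax_union M S0) as [U HU]. destruct (ax_power M U) as [P HP].
  destruct (sepP (fun x => exists W, W ∈ S0 /\ Sub x W) P) as [A HA].
  { defp (FEx (FAnd (FIn 0 2) (fSub 1 0))) (fun _ : nat => S0) (fun _ : nat => G). }
  exists A. intro x. rewrite HA. split; [tauto|]. intro H. split; [|exact H].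
  apply HP. intros w Hw. destruct H as [W [HW HxW]]. apply HU. exists W. split; [exact HW| exact (HxW w Hw)].
Qed.

Lemma tower_dc S0 : DC S0 -> Tower S0.
Proof.
  intros [HL HD] V HV x. destruct (HL V HV) as [T [HT HVT]]. split.
  - intro Hx. apply (HT V HVT) in Hx. destruct Hx as [W [HWT [HWV HxW]]].
    exists W. split; [|split; assumption]. apply (HD V HV W); [exists T; split; assumption| exact HWV].
  - intros [W [HWS [HWV HxW]]]. pose proof (proj1 (HT V HVT W) HWV) as D.
    destruct D as [W1 [HW1 [HW1V HWW1]]].
    apply (HT V HVT). exists W1. split; [exact HW1|]. split; [exact HW1V|].
    intros a Ha. exact (HWW1 a (HxW a Ha)).
Qed.

Lemma acc_lev S0 A : DC S0 -> Acc S0 A -> Lev A.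
Proof.
  intros HDC HA. pose proof (tower_dc S0 HDC) as HTS.
  destruct (single A) as [sA HsA]. destruct (binunion S0 sA) as [S' HS'].
  exists S'. split; [|apply HS'; right; apply HsA; reflexivity].
  intros V HV x. apply HS' in HV. destruct HV as [HV|HV].
  - rewrite (HTS V HV x). split.
    + intros [W [HW R]]. exists W. split; [apply HS'; left; exact HW| exact R].
    + intros [W [HW [HWV HxW]]]. apply HS' in HW. destruct HW as [HW|HW].
      * exists W. tauto.
      * apply HsA in HW. subst W. exfalso. apply (no2 A V HWV). apply HA. exists V. split; [exact HV|]. intros a Ha; exact Ha.
  - apply HsA in HV. subst V. rewrite (HA x). split.
    + intros [W [HW HxW]]. exists W. split; [apply HS'; left; exact HW|]. split; [|exact HxW].
      apply HA. exists W. split; [exact HW| intros a Ha; exact Ha].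
    + intros [W [HW [HWA HxW]]]. apply HS' in HW. destruct HW as [HW|HW].
      * exists W. tauto.
      * apply HsA in HW. subst W. destruct (no1 A HWA).
Qed.


Definition Mt (a s : St) := forall z, z ∈ s <-> forall V, Lev V -> a ∈ V -> z ∈ V.
Definition fMt a s := FAll (Iff (FIn 0 (S s)) (FAll (FImp (fLev 0) (FImp (FIn (2+a) 0) (FIn 1 0))))).

Lemma cover : forall y, exists V, Lev V /\ y ∈ V.
Proof.
  destruct (ax_global_choice M) as [G _]. destruct (ax_infinity M) as [i0 _].
  apply (eps_ind (fun y => exists V, Lev V /\ y ∈ V)).
  { defp (FEx (FAnd (fLev 0) (FIn 1 0))) (fun _ : nat => i0) (fun _ : nat => G). }
  intros y IH.
  destruct (def_class (fun p => exists a s, ispair a s p /\ Mt a s)) as [F HF].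
  { defp (FEx (FEx (FAnd (fPair 1 0 2) (fMt 1 0)))) (fun _ : nat => y) (fun _ : nat => G). }
  assert (Hf : functional St Cl (@elem M) (@cmem M) F).
  { intros a s1 s2 p1 p2 H1 H1F H2 H2F.
    apply HF in H1F; apply HF in H2F.
    destruct H1F as [a1 [t1 [E1 M1]]]; destruct H2F as [a2 [t2 [E2 M2]]].
    destruct (pair_inj _ _ _ _ _ H1 E1). destruct (pair_inj _ _ _ _ _ H2 E2). subst.
    apply ext; intro z. rewrite (M1 z), (M2 z). reflexivity. }
  destruct (ax_replacement M F Hf y) as [B HB].
  destruct (ax_union M B) as [U HU].
  destruct (sepP (fun W => Lev W /\ exists y', y' ∈ y /\ ~ y' ∈ W) U) as [S0 HS0].
  { defp (FAnd (fLev 0) (FEx (FAnd (FIn 0 2) (FNot (FIn 0 1))))) (fun _ : nat => y) (fun _ : nat => G). }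
  assert (HS : forall W, W ∈ S0 <-> Lev W /\ exists y', y' ∈ y /\ ~ y' ∈ W).
  { intro W. rewrite HS0. split; [tauto|]. intro H. split; [|exact H].
    destruct H as [HW [y' [Hy' Hn]]].
    destruct (IH y' Hy') as [V0 [HV0 Hy'V0]].
    destruct (sepP (fun z => forall V, Lev V -> y' ∈ V -> z ∈ V) V0) as [s Hs].
    { defp (FAll (FImp (fLev 0) (FImp (FIn 2 0) (FIn 1 0)))) (fun _ : nat => y') (fun _ : nat => G). }
    assert (Hm : Mt y' s).
    { intro z. rewrite Hs. split; [tauto|]. intro Hz. split; [exact (Hz V0 HV0 Hy'V0)| exact Hz]. }
    apply HU. exists s. split.
    - apply HB. destruct (kpair y' s) as [p Hp]. exists y', p. split; [exact Hy'|]. split; [exact Hp|].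
      apply HF. exists y', s. tauto.
    - apply Hm. intros V HV Hy'V. destruct (Lev_cmp W HW V HV) as [D|[D|D]].
      + exact D.
      + subst; contradiction.
      + exfalso. apply Hn. exact (Lev_trans W HW V D y' Hy'V). }
  assert (DC0 : DC S0).
  { split.
    - intros W HW. apply HS in HW. tauto.
    - intros W HW W' HW' HW'W. apply HS in HW. destruct HW as [HWl [y' [Hy' Hn]]].
      apply HS. split; [exact HW'|]. exists y'. split; [exact Hy'|].
      intro Hc. apply Hn. exact (Lev_trans W HWl W' HW'W y' Hc). }
  destruct (acc_ex S0) as [A1 HA1].
  pose proof (acc_lev S0 A1 DC0 HA1) as HL1.
  assert (Hsub : forall y', y' ∈ y -> y' ∈ A1).
  { intros y' Hy'.
    destruct (IH y' Hy') as [V0 [HV0 Hy'V0]].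
    revert V0 HV0 Hy'V0.
    apply (eps_ind (fun V => Lev V -> y' ∈ V -> y' ∈ A1)).
    { defp (FImp (fLev 0) (FImp (FIn 1 0) (FIn 1 2))) (scons y' (fun _ : nat => A1)) (fun _ : nat => G). }
    intros V IHV [T [HT HVT]] Hy'V.
    apply (HT V HVT) in Hy'V. destruct Hy'V as [W [HWT [HWV Hy'W]]].
    assert (HWl : Lev W) by (exists T; split; assumption).
    destruct (classic (y' ∈ W)) as [C|C].
    - exact (IHV W HWV HWl C).
    - apply HA1. exists W. split; [apply HS; split; [exact HWl| exists y'; split; assumption] | exact Hy'W]. }
  destruct (single A1) as [sA HsA]. destruct (binunion S0 sA) as [S2 HS2].
  assert (DC2 : DC S2).
  { split.
    - intros W HW. apply HS2 in HW. destruct HW as [HW|HW]; [exact (proj1 DC0 W HW)| apply HsA in HW; subst; exact HL1].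
    - intros W HW W' HW' HW'W. apply HS2. left. apply HS2 in HW. destruct HW as [HW|HW].
      + exact (proj2 DC0 W HW W' HW' HW'W).
      + apply HsA in HW. subst W. apply HA1 in HW'W. destruct HW'W as [W0 [HW0 HW'W0]].
        apply HS in HW0. destruct HW0 as [_ [y' [Hy' Hn]]]. apply HS. split; [exact HW'|].
        exists y'. split; [exact Hy'|]. intro Hc. apply Hn. exact (HW'W0 y' Hc). }
  destruct (acc_ex S2) as [A2 HA2].
  exists A2. split; [exact (acc_lev S2 A2 DC2 HA2)|].
  apply HA2. exists A1. split; [apply HS2; right; apply HsA; reflexivity| exact Hsub].
Qed.


Definition LE (x y : St) := forall V, Lev V -> y ∈ V -> x ∈ V.

Lemma main_sec (V0 : Cl) : (forall x, x ∈c V0) -> minimal_access_ideal M V0 (set_classes M).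
Proof.
  intro HV.
  destruct (ax_global_choice M) as [G _]. destruct (ax_infinity M) as [i0 _].
  split; [split|].
  - split.
    + exists (FEx (FAll (Iff (FInC 0 0) (FIn 0 1)))), (fun _ : nat => i0), (fun _ : nat => G). intro A. reflexivity.
    + split; [intros Y _ z _; apply HV|].
      split.
      * intros Y1 Y2 Y [a1 H1] [a2 H2] HY. destruct (binunion a1 a2) as [u Hu]. exists u. intro z.
        rewrite HY, H1, H2, Hu. reflexivity.
      * split.
        -- intros Y Z [a Ha] HZ. destruct (sep Z a) as [b Hb]. exists b. intro z. rewrite Hb.
           split; [intro H; split; [apply Ha; apply HZ; exact H| exact H] | tauto].
        -- intros [a Ha]. apply (no1 a). apply Ha. apply HV.
  - destruct (def_class (fun p => exists x y, ispair x y p /\ LE x y)) as [R HR].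
    { defp (FEx (FEx (FAnd (fPair 1 0 2) (FAll (FImp (fLev 0) (FImp (FIn 1 0) (FIn 2 0))))))) (fun _ : nat => i0) (fun _ : nat => G). }
    assert (Hrle : forall a b, rle M R a b <-> LE a b).
    { intros a b. split.
      - intros [p [Hp HpR]]. apply HR in HpR. destruct HpR as [x [y [Hp' Hle]]].
        destruct (pair_inj _ _ _ _ _ Hp Hp'). subst. exact Hle.
      - intro H. destruct (kpair a b) as [p Hp]. exists p. split; [exact Hp|]. apply HR. exists a, b. tauto. }
    exists R. split.
    + split; [|split; [|split; [|split]]].
      * intros p Hp. apply HR in Hp. destruct Hp as [x [y [Hp _]]]. exists x, y. split; [exact Hp| split; apply HV].
      * intros x _. apply Hrle. intros V HVl H; exact H.
      * intros x y z _ _ _ H1 H2. apply Hrle. apply Hrle in H1. apply Hrle in H2.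
        intros V HVl Hz. exact (H1 V HVl (H2 V HVl Hz)).
      * intros x y _ _. destruct (classic (rle M R x y)) as [C|C]; [left; exact C|]. right. apply Hrle.
        intros V HVl Hx. apply NNPP. intro Hy. apply C. apply Hrle. intros W HWl HyW.
        destruct (Lev_cmp V HVl W HWl) as [D|[D|D]].
        -- exact (Lev_trans W HWl V D x Hx).
        -- subst W. exact Hx.
        -- exfalso. exact (Hy (Lev_trans V HVl W D y HyW)).
      * intros x _. destruct (cover x) as [V [HVl HxV]]. exists V. split; [apply HV|].
        intro H. apply Hrle in H. exact (no1 V (H V HVl HxV)).
    + intros Y _ [x [_ Hx]]. destruct (cover x) as [W [HWl HxW]]. destruct (sep Y W) as [b Hb].
      exists b. intro z. rewrite Hb. split; [intro H; split; [|exact H] | tauto].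
      destruct (Hx z H) as [_ Hzx]. apply Hrle in Hzx. exact (Hzx W HWl HxW).
  - intros J HJ HJI [A [[a Ha] HnJ]] [R [HR HS]].
    destruct HR as [_ [_ [_ [Htot _]]]].
    assert (Hsx : forall x, exists s, forall y, y ∈ s <-> rle M R y x).
    { intro x. destruct (def_class (fun y => rle M R y x)) as [C HC].
      { defp (FEx (FAnd (fPair 1 2 0) (FInC 0 0))) (fun _ : nat => x) (fun _ : nat => R). }
      assert (HJC : J C).
      { apply HS. intros z _; apply HV. exists x. split; [apply HV|]. intros y Hy.
        split; [apply HV| apply HC; exact Hy]. }
      destruct (HJI C HJC) as [s Hs]. exists s. intro y. rewrite <- Hs. apply HC. }
    destruct (def_class (fun p => exists x s, ispair x s p /\ forall y, y ∈ s <-> rle M R y x)) as [F HF].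
    { defp (FEx (FEx (FAnd (fPair 1 0 2) (FAll (Iff (FIn 0 1) (FEx (FAnd (fPair 1 3 0) (FInC 0 0))))))))
        (fun _ : nat => i0) (fun _ : nat => R). }
    assert (Hf : functional St Cl (@elem M) (@cmem M) F).
    { intros x s1 s2 p1 p2 H1 H1F H2 H2F. apply HF in H1F; apply HF in H2F.
      destruct H1F as [x1 [t1 [E1 M1]]]; destruct H2F as [x2 [t2 [E2 M2]]].
      destruct (pair_inj _ _ _ _ _ H1 E1). destruct (pair_inj _ _ _ _ _ H2 E2). subst.
      apply ext; intro z. rewrite (M1 z), (M2 z). reflexivity. }
    destruct (ax_replacement M F Hf a) as [B HB].
    destruct (ax_union M B) as [u Hu].
    assert (Hall : forall z, z ∈ u).
    { intro z. assert (Ex : exists x, x ∈ a /\ rle M R z x).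
      { apply NNPP. intro Hn. apply HnJ. apply HS.
        - intros w _; apply HV.
        - exists z. split; [apply HV|]. intros y Hy. split; [apply HV|]. apply Ha in Hy.
          destruct (Htot y z (HV y) (HV z)) as [D|D]; [exact D|]. exfalso. apply Hn. exists y. split; assumption. }
      destruct Ex as [x [Hxa Hzx]]. destruct (Hsx x) as [s Hs]. apply Hu. exists s. split.
      - apply HB. destruct (kpair x s) as [p Hp]. exists x, p. split; [exact Hxa|]. split; [exact Hp|].
        apply HF. exists x, s. tauto.
      - apply Hs. exact Hzx. }
    exact (no1 u (Hall u)).
Qed.

End Dev.

Theorem theorem2p3 : forall (M : GBC_model) (V : gcls M),
  (forall x : gset M, cmem x V) ->
  minimal_access_ideal M V (set_classes M).
Proof. intros M V HV. exact (main_sec M V HV). Qed.
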